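(* Let $\mathcal{B}_t(x)$ denote the generalized binomial series, defined for real $t$ by $\mathcal{B}_t(x)^r=\sum_{k\ge0}\binom{tk+r}{k}\frac{r}{tk+r}x^k$ for all real $r$. Then $\mathcal{B}_3(x)$, the power series solution of $X=1+xX^3$, satisfies $$\mathcal{B}_3(x)=\mathcal{B}_{3/2}(x^{1/2})^{1/2}\,\mathcal{B}_{3/2}(-x^{1/2})^{1/2}.$$ Moreover, the two other roots $\sigma_1,\sigma_2$ of $xX^3-X+1=0$ satisfy $x^{1/2}\sigma_1=-\mathcal{B}_{3/2}(-x^{1/2})^{-1/2}$ and $x^{1/2}\sigma_2=\mathcal{B}_{3/2}(x^{1/2})^{-1/2}$, so that $xX^3-X+1=x(X-\mathcal{B}_3(x))(X-\sigma_1)(X-\sigma_2)$.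
   Context: Here $\binom{a}{k}$ for real $a$ denotes the usual generalized binomial coefficient $a(a-1)\cdots(a-k+1)/k!$. *)

(* Defs.v *)
(* formal power series over rat, represented by coefficient
   functions nat -> rat; Puiseux series in x^(1/2) are represented as Laurent
   series in y = x^(1/2). *)
From HB Require Import structures.
From mathcomp Require Import all_boot all_order all_algebra.
Set Implicit Arguments. Unset Strict Implicit. Unset Printing Implicit Defensive.
Import Order.TTheory GRing.Theory Num.Theory.
Local Open Scope ring_scope.

Definition gbin (a : rat) (k : nat) : rat :=
  (\prod_(i < k) (a - i%:R)) / (k`!)%:R.

(* k-th coefficient of B_t(x)^r : binom(tk+r, k) * r/(tk+r) *)
Definition Bcoef (t r : rat) (k : nat) : rat :=
  gbin (t * k%:R + r) k * (r / (t * k%:R + r)).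

Definition series := nat -> rat.
Definition sadd (f g : series) : series := fun k => f k + g k.
Definition sopp (f : series) : series := fun k => - f k.
Definition smul (f g : series) : series :=
  fun n => \sum_(i < n.+1) f i * g (n - i)%N.
Definition sone : series := fun k => (k == 0%N)%:R.
Definition sX : series := fun k => (k == 1%N)%:R.
Definition sneg (f : series) : series := fun k => (-1) ^+ k * f k.
Definition ssq (f : series) : series := fun k => if odd k then 0 else f k./2.
Definition sshift (m : nat) (f : series) : series :=
  fun k => if (m <= k)%N then f (k - m)%N else 0.

(* Laurent series: (n, f) represents y^(-n) * f(y) *)
Definition laurent := (nat * series)%type.
Definition lser (f : series) : laurent := (0%N, f).
Definition ladd (a b : laurent) : laurent :=
  ((a.1 + b.1)%N, sadd (sshift b.1 a.2) (sshift a.1 b.2)).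
Definition lopp (a : laurent) : laurent := (a.1, sopp a.2).
Definition lsub (a b : laurent) : laurent := ladd a (lopp b).
Definition lmul (a b : laurent) : laurent := ((a.1 + b.1)%N, smul a.2 b.2).
Definition lequiv (a b : laurent) : Prop :=
  forall k, sshift b.1 a.2 k = sshift a.1 b.2 k.
Definition lzero : laurent := lser (fun _ => 0).
Definition lone : laurent := lser sone.
Definition ly : laurent := lser sX.
Definition lx : laurent := lser (ssq sX).

(* Main.v *)
Require Import Defs.
From HB Require Import structures.
From mathcomp Require Import all_boot all_order all_algebra.
From mathcomp Require Import boolp.
From mathcomp Require Import ring.
Set Implicit Arguments. Unset Strict Implicit. Unset Printing Implicit Defensive.
Import Order.TTheory GRing.Theory Num.Theory.
Local Open Scope ring_scope.

Definition fps : Type := nat -> rat.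
HB.instance Definition _ := gen_eqMixin fps.
HB.instance Definition _ := gen_choiceMixin fps.

Lemma fext (f g : fps) : f =1 g -> f = g.
Proof. exact: funext. Qed.

Definition fzero : fps := fun _ => 0.
Lemma fadd_A : associative (sadd : fps -> fps -> fps).
Proof. by move=> f g h; apply: fext => k; rewrite /sadd addrA. Qed.
Lemma fadd_C : commutative (sadd : fps -> fps -> fps).
Proof. by move=> f g; apply: fext => k; rewrite /sadd addrC. Qed.
Lemma fadd_0 : left_id fzero (sadd : fps -> fps -> fps).
Proof. by move=> f; apply: fext => k; rewrite /sadd /fzero add0r. Qed.
Lemma fadd_N : left_inverse fzero (sopp : fps -> fps) sadd.
Proof. by move=> f; apply: fext => k; rewrite /sadd /sopp /fzero addNr. Qed.
HB.instance Definition _ := GRing.isZmodule.Build fps fadd_A fadd_C fadd_0 fadd_N.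

Lemma fmul_C : commutative (smul : fps -> fps -> fps).
Proof.
move=> f g; apply: fext => n; rewrite /smul.
rewrite (reindex_inj rev_ord_inj) /=; apply: eq_bigr => i _.
by rewrite subKn ?leq_ord // mulrC.
Qed.
Lemma fmul_1 : left_id (sone : fps) smul.
Proof.
move=> f; apply: fext => n; rewrite /smul big_ord_recl /= /sone /= mul1r subn0.
by rewrite big1 ?addr0 // => i _; rewrite mul0r.
Qed.
Lemma fmul_Dl : left_distributive (smul : fps -> fps -> fps) sadd.
Proof.
move=> f g h; apply: fext => n; rewrite /smul /sadd -big_split /=.
by apply: eq_bigr => i _; rewrite mulrDl.
Qed.
Lemma fmul_A : associative (smul : fps -> fps -> fps).
Proof.
move=> f g h; apply: fext => n; rewrite /smul; symmetry.
transitivity (\sum_(i < n.+1) \sum_(j < n.+1)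
   (if (j <= i)%N then f j * g (i - j)%N * h (n - i)%N else 0)).
  apply: eq_bigr => i _; rewrite /smul big_distrl /=.
  rewrite (big_ord_widen n.+1 (fun j => f j * g (i - j)%N * h (n - i)%N)) ?ltn_ord //.
  by rewrite big_mkcond /=.
rewrite exchange_big /=; apply: eq_bigr => a _.
rewrite big_distrr /= -big_mkcond /=.
rewrite (eq_bigl (fun i : 'I_n.+1 => xpredT i && (a <= i)%N)) //.
rewrite -(big_geq_mkord a n.+1 xpredT (fun i => f a * g (i - a)%N * h (n - i)%N)) /=.
rewrite -{1}(add0n a) big_addn subSn ?(ltnSE (ltn_ord a)) // big_mkord.
apply: eq_bigr => l _; rewrite addnK mulrA; congr (_ * _ * h _).
by rewrite subnDA subnAC.
Qed.

Lemma fone_neq0 : (sone : fps) != 0.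
Proof.
apply/eqP => /(congr1 (fun f : fps => f 0%N)); rewrite /sone /=.
by move/eqP; rewrite oner_eq0.
Qed.
HB.instance Definition _ := GRing.Zmodule_isComNzRing.Build fps fmul_A fmul_C fmul_1 fmul_Dl fone_neq0.

Lemma smulE (f g : fps) : smul f g = f * g. Proof. by []. Qed.
Lemma saddE (f g : fps) : sadd f g = f + g. Proof. by []. Qed.
Lemma soppE (f : fps) : sopp f = - f. Proof. by []. Qed.
Lemma soneE : (sone : fps) = 1. Proof. by []. Qed.
Lemma fcoefD (f g : fps) k : (f + g) k = f k + g k. Proof. by []. Qed.
Lemma fcoefN (f : fps) k : (- f) k = - f k. Proof. by []. Qed.
Lemma fcoef0 k : (0 : fps) k = 0. Proof. by []. Qed.
Lemma fcoefM (f g : fps) n : (f * g) n = \sum_(i < n.+1) f i * g (n - i)%N. Proof. by []. Qed.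
Lemma fcoef1 k : (1 : fps) k = (k == 0%N)%:R. Proof. by []. Qed.

Notation y := (sX : fps).

Lemma mulXE (f : fps) k : (y * f) k = if k is k'.+1 then f k' else 0.
Proof.
rewrite fcoefM big_ord_recl /= /sX /= mul0r add0r.
case: k => [|k]; first by rewrite big_ord0.
rewrite big_ord_recl /= mul1r subSS subn0 big1 ?addr0 // => i _.
by rewrite /bump /= mul0r.
Qed.

Lemma sshiftE m (f : fps) : sshift m f = y ^+ m * f.
Proof.
elim: m => [|m IH]; first by apply: fext => k; rewrite expr0 mul1r /sshift subn0.
apply: fext => k; rewrite exprS -mulrA mulXE -IH /sshift.
by case: k => [|k] //; rewrite ltnS subSS.
Qed.

Lemma cancel_y m (f g : fps) : y ^+ m * f = y ^+ m * g -> f = g.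
Proof.
move=> E; apply: fext => k.
have := congr1 (fun h : fps => h (k + m)%N) E; rewrite -!sshiftE /sshift.
by rewrite leq_addl addnK.
Qed.

Lemma fix_y (d e : fps) : d = y * (d * e) -> d = 0.
Proof.
move=> E; apply: fext => n; elim/ltn_ind: n => n IH.
rewrite E mulXE fcoef0; case: n IH => [|n] IH //.
rewrite fcoefM big1 // => i _; rewrite IH ?mul0r // ltnS; exact: leq_ord.
Qed.

Lemma cancel_unit (f g : fps) : f 0%N != 0 -> f * g = 0 -> g = 0.
Proof.
move=> f0 E; apply: fext => n; elim/ltn_ind: n => n IH.
have := congr1 (fun h : fps => h n) E; rewrite fcoefM big_ord_recl /= subn0 fcoef0.
rewrite big1 ?addr0; first by move/eqP; rewrite mulf_eq0 (negbTE f0) /= => /eqP.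
move=> i _; rewrite IH ?mulr0 // /bump /=; case: n IH i => [|n] IH i; first by case: i.
by rewrite add1n subSS ltnS leq_subr.
Qed.

Lemma snegM (f g : fps) : sneg (f * g) = (sneg f : fps) * sneg g.
Proof.
apply: fext => n; rewrite /sneg !fcoefM big_distrr /=; apply: eq_bigr => i _.
rewrite mulrACA -exprD subnKC // -ltnS; exact: ltn_ord.
Qed.
Lemma snegD (f g : fps) : sneg (f + g) = (sneg f : fps) + sneg g.
Proof. by apply: fext => n; rewrite /sneg !fcoefD mulrDr. Qed.
Lemma snegN (f : fps) : sneg (- f) = - (sneg f : fps).
Proof. by apply: fext => n; rewrite /sneg !fcoefN mulrN. Qed.
Lemma sneg1 : sneg (1 : fps) = 1 :> fps.
Proof. by apply: fext => -[|n]; rewrite /sneg fcoef1 ?mulr0 // expr0 mul1r. Qed.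
Lemma snegX : sneg y = - y :> fps.
Proof. by apply: fext => -[|[|n]]; rewrite /sneg fcoefN /sX /= ?mulr0 ?oppr0 // expr1 mulN1r. Qed.

Lemma sum_even (F : nat -> rat) m : (forall i, odd i -> F i = 0) ->
  \sum_(i < (m.*2).+1) F i = \sum_(j < m.+1) F (j.*2).
Proof.
move=> Fo; elim: m => [|m IH]; first by rewrite !big_ord_recl !big_ord0.
rewrite doubleS big_ord_recr big_ord_recr [RHS]big_ord_recr /= IH Fo /= ?odd_double // addr0.
by [].
Qed.

Lemma ssqM (f g : fps) : ssq (f * g) = (ssq f : fps) * ssq g.
Proof.
apply: fext => n; rewrite [RHS]fcoefM /ssq.
case: (boolP (odd n)) => on.
  rewrite big1 // => i _; case: (boolP (odd i)) => oi; first by rewrite mul0r.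
  have ilen : (i <= n)%N by rewrite -ltnS ltn_ord.
  by rewrite oddB // on /= (negbTE oi) /= mulr0.
have -> : n = (n./2).*2 by rewrite -{1}(odd_double_half n) (negbTE on).
move: (n./2) => m; rewrite ?odd_double ?doubleK.
rewrite (@sum_even (fun i => (if odd i then 0 else f i./2) *
    (if odd (m.*2 - i) then 0 else g (m.*2 - i)./2))); last first.
  by move=> i oi; rewrite oi mul0r.
rewrite fcoefM; apply: eq_bigr => j _.
by rewrite odd_double doubleK -doubleB odd_double doubleK.
Qed.
Lemma ssqD (f g : fps) : ssq (f + g) = (ssq f : fps) + ssq g.
Proof. by apply: fext => n; rewrite /ssq !fcoefD; case: odd; rewrite ?addr0. Qed.
Lemma ssq1 : ssq (1 : fps) = 1 :> fps.
Proof. by apply: fext => -[|[|n]] //; rewrite /ssq fcoef1 /=; case: odd. Qed.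
Lemma ssqX : ssq y = y ^+ 2 :> fps.
Proof.
apply: fext => n; rewrite expr2 mulXE /ssq.
case: n => [|[|[|[|n]]]] //=; rewrite /sX /=; case: odd => //.
Qed.



Fixpoint ff (u : rat) (j : nat) : rat :=
  if j is j'.+1 then u * ff (u - 1) j' else 1.

Lemma ffS' u j : ff u j.+1 = ff u j * (u - j%:R).
Proof.
elim: j u => [|j IH] u; first by rewrite /= mulr1 mul1r subr0.
change (u * ff (u - 1) j.+1 = (u * ff (u - 1) j) * (u - (j.+1)%:R)).
rewrite IH mulrA; congr (_ * _); rewrite -natr1; ring.
Qed.

Definition fc (t r : rat) (k : nat) : rat :=
  if k is j.+1 then r * ff (r + t * k%:R - 1) j / (k`!)%:R else 1.

Lemma fact_neq0 k : (k`!)%:R != 0 :> rat.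
Proof. by rewrite pnatr_eq0 -lt0n fact_gt0. Qed.

Lemma fc_diff t r j : fc t r j.+1 - fc t (r - 1) j.+1 = fc t (r + t - 1) j.
Proof.
case: j => [|m]; first by rewrite /fc /= (_ : (1`!)%:R = 1 :> rat) // !divr1; ring.
rewrite /fc.
set u := r + t * (m.+2)%:R - 1.
have -> : r - 1 + t * (m.+2)%:R - 1 = u - 1 by rewrite /u; ring.
have -> : r + t - 1 + t * (m.+1)%:R - 1 = u - 1 by rewrite /u -!natr1; ring.
rewrite [ff u _]/= ffS' factS natrM.
have h1 := fact_neq0 m.+1.
have h2 : (m.+2)%:R != 0 :> rat by rewrite pnatr_eq0.
have hu : u = r + t * (m.+2)%:R - 1 by [].
move: (ff (u - 1) m) => X.
rewrite hu -!natr1; field.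
by rewrite !natr1 h1 h2.
Qed.

Lemma fc0 t k : fc t 0 k.+1 = 0.
Proof. by rewrite /fc !mul0r. Qed.

Definition ispoly (h : rat -> rat) := exists p : {poly rat}, forall x, h x = p.[x].

Lemma ispoly_const c : ispoly (fun _ => c).
Proof. by exists c%:P => x; rewrite hornerC. Qed.
Lemma ispoly_id : ispoly id.
Proof. by exists 'X => x; rewrite hornerX. Qed.
Lemma ispoly_add h1 h2 : ispoly h1 -> ispoly h2 -> ispoly (fun x => h1 x + h2 x).
Proof. by move=> [p1 e1] [p2 e2]; exists (p1 + p2) => x; rewrite hornerD e1 e2. Qed.
Lemma ispoly_mul h1 h2 : ispoly h1 -> ispoly h2 -> ispoly (fun x => h1 x * h2 x).
Proof. by move=> [p1 e1] [p2 e2]; exists (p1 * p2) => x; rewrite hornerM e1 e2. Qed.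
Lemma ispoly_opp h1 : ispoly h1 -> ispoly (fun x => - h1 x).
Proof. by move=> [p1 e1]; exists (- p1) => x; rewrite hornerN e1. Qed.
Lemma ispoly_ext h1 h2 : ispoly h1 -> (forall x, h1 x = h2 x) -> ispoly h2.
Proof. by move=> [p e] E; exists p => x; rewrite -E. Qed.
Lemma ispoly_sum n (H : nat -> rat -> rat) : (forall k, ispoly (H k)) ->
  ispoly (fun x => \sum_(k < n) H k x).
Proof.
move=> P; elim: n => [|n IH].
  by apply: (ispoly_ext (ispoly_const 0)) => x; rewrite big_ord0.
apply: (ispoly_ext (ispoly_add IH (P n))) => x; by rewrite big_ord_recr.
Qed.
Lemma ispoly_ff c j : ispoly (fun x => ff (x + c) j).
Proof.
elim: j c => [|j IH] c /=; first exact: ispoly_const.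
apply: ispoly_mul; first exact: (ispoly_add ispoly_id (ispoly_const c)).
by apply: (ispoly_ext (IH (c - 1))) => x; rewrite addrA.
Qed.
Lemma ispoly_fc t c k : ispoly (fun x => fc t (x + c) k).
Proof.
case: k => [|j] /=; first exact: ispoly_const.
apply: ispoly_mul; last exact: ispoly_const.
apply: ispoly_mul; first exact: (ispoly_add ispoly_id (ispoly_const c)).
apply: (ispoly_ext (ispoly_ff (c + t * (j.+1)%:R - 1) j)) => x.
by rewrite !addrA.
Qed.

Lemma ispoly_nat0 h : ispoly h -> (forall m : nat, h m%:R = 0) -> forall x, h x = 0.
Proof.
move=> [p e] H x; rewrite e.
suff -> : p = 0 by rewrite horner0.
apply: (@roots_geq_poly_eq0 _ p [seq i%:R | i <- iota 0 (size p)]).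
- by apply/allP => z /mapP [i _ ->]; rewrite /root -e H.
- by rewrite map_inj_uniq ?iota_uniq //; by move=> a b /eqP; rewrite eqr_nat => /eqP.
- by rewrite size_map size_iota.
Qed.

Lemma HR t s n r :
  \sum_(k < n.+1) fc t r k * fc t s (n - k)%N = fc t (r + s) n.
Proof.
elim: n r => [|n IH] r.
  by rewrite big_ord_recl big_ord0 /= addr0 mulr1.
pose D x := \sum_(k < n.+2) fc t x k * fc t s (n.+1 - k)%N - fc t (x + s) n.+1.
suff: forall x, D x = 0 by move=> /(_ r) /eqP; rewrite subr_eq0 => /eqP.
have step : forall x, D x = D (x - 1).
  move=> x; apply/eqP; rewrite -subr_eq0; apply/eqP.
  have E1 : \sum_(k < n.+2) (fc t x k - fc t (x - 1) k) * fc t s (n.+1 - k)%N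
            = fc t (x + t - 1 + s) n.
    rewrite big_ord_recl /= subrr mul0r add0r -IH; apply: eq_bigr => i _.
    by rewrite fc_diff.
  have E2 : fc t (x + s) n.+1 - fc t (x - 1 + s) n.+1 = fc t (x + t - 1 + s) n.
    rewrite (_ : x - 1 + s = x + s - 1); last by ring.
    by rewrite fc_diff (_ : x + s + t - 1 = x + t - 1 + s) //; ring.
  rewrite /D.
  set S1 := \sum_(k < n.+2) _; set S2 := \sum_(k < n.+2) _.
  have {}E1 : S1 - S2 = fc t (x + t - 1 + s) n.
    by rewrite -E1 /S1 /S2 -sumrB; apply: eq_bigr => k _; rewrite mulrBl.
  have -> : S1 - fc t (x + s) n.+1 - (S2 - fc t (x - 1 + s) n.+1)
     = (S1 - S2) - (fc t (x + s) n.+1 - fc t (x - 1 + s) n.+1) by ring.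
  by rewrite E1 E2 subrr.
apply: ispoly_nat0.
  apply: ispoly_add; last first.
    apply: ispoly_opp; exact: ispoly_fc.
  apply: (@ispoly_sum _ (fun k x => fc t x k * fc t s (n.+1 - k)%N)) => k.
  apply: ispoly_mul; last exact: ispoly_const.
  by apply: (ispoly_ext (ispoly_fc t 0 k)) => x; rewrite addr0.
elim=> [|m IHm].
  rewrite /D big_ord_recl /= mul1r add0r subn0 big1 ?addr0 ?add0r ?subrr // => i _.

  by rewrite !mul0r.
by rewrite step -natr1 addrK.
Qed.

Lemma prod_ff a k : \prod_(i < k) (a - i%:R) = ff a k.
Proof. by elim: k => [|k IH]; rewrite ?big_ord0 // big_ord_recr ffS' -IH. Qed.

Lemma Bcoef_fc t r k : t * k%:R + r != 0 -> Bcoef t r k = fc t r k.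
Proof.
move=> nz; rewrite /Bcoef /gbin prod_ff.
case: k nz => [|j] nz.
  rewrite /= mulr0 add0r in nz *; rewrite divr1 mul1r; exact: divff.
rewrite /fc [ff _ j.+1]/=.
rewrite (_ : t * (j.+1)%:R + r - 1 = r + t * (j.+1)%:R - 1); last by ring.
move: (ff _ j) nz => X nz.
have hf := fact_neq0 j.+1.
field.
by rewrite hf /= nat1r.
Qed.



Opaque smul sadd sopp sone sX.

Definition A (t r : rat) : fps := fun n => fc t r n.

Lemma AM t r s : A t r * A t s = A t (r + s).
Proof. by apply: fext => n; rewrite fcoefM /A HR. Qed.

Lemma A0 t : A t 0 = 1.
Proof. by apply: fext => -[|n]; rewrite /A fcoef1 // fc0. Qed.

Lemma A_0 t r : A t r 0%N = 1. Proof. by []. Qed.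

Lemma Ashift t : A t 1 = 1 + y * A t t.
Proof.
apply: fext => -[|n]; rewrite fcoefD mulXE fcoef1 /=; first by rewrite addr0.
rewrite add0r /A.
change (fc t 1 n.+1 = fc t t n).
have := fc_diff t 1 n; rewrite subrr fc0 subr0 => ->.
by rewrite (_ : 1 + t - 1 = t) //; ring.
Qed.

Lemma lequivP (a b : laurent) :
  lequiv a b <-> y ^+ b.1 * (a.2 : fps) = y ^+ a.1 * (b.2 : fps).
Proof.
split => [H|H]; first by apply: fext => k; rewrite -!sshiftE; exact: H.
by move=> k; rewrite !sshiftE H.
Qed.

Lemma ladd2 (a b : laurent) : (ladd a b).2 = y ^+ b.1 * (a.2 : fps) + y ^+ a.1 * (b.2 : fps) :> fps.
Proof. by rewrite /= saddE !sshiftE. Qed.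
Lemma lmul2 (a b : laurent) : (lmul a b).2 = (a.2 : fps) * (b.2 : fps) :> fps.
Proof. by []. Qed.
Lemma lopp2 (a : laurent) : (lopp a).2 = - (a.2 : fps) :> fps.
Proof. by []. Qed.
Lemma lx2 : lx.2 = y ^+ 2 :> fps.
Proof. exact: ssqX. Qed.

Lemma nz31 k : 3 * k%:R + 1 != 0 :> rat.
Proof.
have -> : 3 * k%:R + 1 = (3 * k + 1)%N%:R :> rat by rewrite natrD natrM.
by rewrite pnatr_eq0 addn1.
Qed.
Lemma nzh1 k : 3 / 2 * k%:R + 1 / 2 != 0 :> rat.
Proof.
rewrite (_ : 3 / 2 * k%:R + 1 / 2 = (3 * k%:R + 1) / 2 :> rat); last by field.
by rewrite mulf_eq0 negb_or nz31.
Qed.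
Lemma nzh2 k : 3 / 2 * k%:R + - (1 / 2) != 0 :> rat.
Proof.
rewrite (_ : 3 / 2 * k%:R - 1 / 2 = ((3 * k)%N%:R - 1) / 2 :> rat); last by rewrite natrM; field.
rewrite mulf_eq0 negb_or /= andbT subr_eq0 (_ : 1 = 1%N%:R) // eqr_nat.
by case: k => [|k] //; rewrite mulnS.
Qed.

Lemma sneg0 : sneg (0 : fps) = 0 :> fps.
Proof. by apply: fext => k; rewrite /sneg fcoef0 mulr0. Qed.
Lemma lzero2 : lzero.2 = 0 :> fps. Proof. by []. Qed.
Lemma lone2 : lone.2 = 1 :> fps. Proof. by []. Qed.
Lemma ly2 : ly.2 = y :> fps. Proof. by []. Qed.


Lemma uniq_sol (u v : fps) : u - 1 - y ^+ 2 * (u * (u * u)) = 0 ->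
  v - 1 - y ^+ 2 * (v * (v * v)) = 0 -> u = v.
Proof.
move=> hu hv; apply/eqP; rewrite -subr_eq0; apply/eqP; apply: (@fix_y _ (y * (u * u + u * v + v * v))).
transitivity ((u - 1 - y ^+ 2 * (u * (u * u))) - (v - 1 - y ^+ 2 * (v * (v * v)))
      + y * ((u - v) * (y * (u * u + u * v + v * v)))); first by ring.
by rewrite hu hv; ring.
Qed.

Lemma alg (Z W a b : fps) :
  Z * Z - 1 - y * (Z * (Z * Z)) = 0 -> W * W - 1 + y * (W * (W * W)) = 0 ->
  (Z + W) 0%N != 0 -> Z 0%N != 0 -> a * Z = 1 -> b * W = 1 ->
  [/\ Z * W - 1 - y ^+ 2 * ((Z * W) * ((Z * W) * (Z * W))) = 0,
      y * (- b + a) + y ^+ 2 * (Z * W) = 0,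
      (- b) * a + y * (Z * W) * (- b + a) = -1 &
      (Z * W) * (- b) * a = -1].
Proof.
move=> hZ0 hW0 ZW0 Z0 GZ GW.
have Q0 : Z * Z * (W * W) - Z * Z + Z * W - W * W = 0.
  apply: (cancel_unit ZW0).
  transitivity (W * (W * W) * (Z * Z - 1 - y * (Z * (Z * Z)))
                + Z * (Z * Z) * (W * W - 1 + y * (W * (W * W)))); first by ring.
  by rewrite hZ0 hW0; ring.
have P0 : Z * W - 1 - y ^+ 2 * ((Z * W) * ((Z * W) * (Z * W))) = 0.
  transitivity ((Z * Z * (W * W) - Z * Z + Z * W - W * W)
     - (Z * Z - 1) * (W * W - 1 + y * (W * (W * W)))
     + (Z * Z - 1 - y * (Z * (Z * Z))) * (1 - W * W + (W * W - 1 + y * (W * (W * W)))));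
    first by ring.
  by rewrite Q0 hZ0 hW0; ring.
have D1 : Z - W - y * ((Z * W) * (Z * W)) = 0.
  apply: (cancel_unit Z0).
  transitivity (- (Z * Z * (W * W) - Z * Z + Z * W - W * W)
     + W * W * (Z * Z - 1 - y * (Z * (Z * Z)))); first by ring.
  by rewrite Q0 hZ0; ring.
have eWZ : W - Z = - (y * ((Z * W) * (Z * W))).
  transitivity (- (Z - W - y * ((Z * W) * (Z * W))) - y * ((Z * W) * (Z * W))); first by ring.
  by rewrite D1; ring.
have eab : - b + a = a * b * (W - Z).
  transitivity (- b * (a * Z) + a * (b * W)); first by rewrite GZ GW; ring.
  by ring.
have eP : 1 + y ^+ 2 * ((Z * W) * ((Z * W) * (Z * W))) = Z * W.
  transitivity (Z * W - (Z * W - 1 - y ^+ 2 * ((Z * W) * ((Z * W) * (Z * W))))); first by ring.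
  by rewrite P0; ring.
split => //.
- rewrite eab eWZ.
  transitivity (y ^+ 2 * (Z * W) * (1 - (a * Z) * (b * W))); first by ring.
  by rewrite GZ GW; ring.
- rewrite eab eWZ.
  transitivity (- (a * b) * (1 + y ^+ 2 * ((Z * W) * ((Z * W) * (Z * W))))); first by ring.
  rewrite eP; transitivity (- ((a * Z) * (b * W))); first by ring.
  by rewrite GZ GW; ring.
- transitivity (- ((a * Z) * (b * W))); first by ring.
  by rewrite GZ GW; ring.
Qed.


Definition Pl (X : laurent) := ladd (lsub (lmul lx (lmul X (lmul X X))) X) lone.

Lemma root_ok (n : nat) (f h : fps) : y * f = y ^+ n * h ->
  h * (h * h) - h + y = 0 -> lequiv (Pl (n, f)) lzero.
Proof.
move=> H E; rewrite lequivP /Pl /lsub !ladd2 !lmul2 !lopp2 lx2 lone2 lzero2 /=.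
rewrite !exprD !expr0 !mul1r mulr0.
move: H; move: (y ^+ n) => Y H.
apply: (@cancel_y 3); rewrite mulr0.
transitivity (Y * y ^+ 2 * ((y * f) * ((y * f) * (y * f))) - Y * (Y * Y) * y ^+ 2 * (y * f)
   + Y * (Y * Y) * Y * y ^+ 3); first by ring.
rewrite H.
transitivity (Y * (Y * (Y * Y)) * y ^+ 2 * (h * (h * h) - h + y)); first by ring.
by rewrite E; ring.
Qed.

Lemma fact_ok (m n1 n2 : nat) (g f1 f2 h1 h2 s : fps) :
  y * f1 = y ^+ n1 * h1 -> y * f2 = y ^+ n2 * h2 ->
  y * (h1 + h2) + y ^+ 2 * s = 0 ->
  h1 * h2 + y * s * (h1 + h2) = -1 ->
  s * h1 * h2 = -1 ->
  lequiv (Pl (m, g)) (lmul lx (lmul (lsub (m, g) (lser s))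
            (lmul (lsub (m, g) (n1, f1)) (lsub (m, g) (n2, f2))))).
Proof.
move=> H1 H2 E1 E2 E3.
rewrite lequivP /Pl /lsub !ladd2 !lmul2 !ladd2 !lopp2 lx2 lone2 /=.
rewrite !exprD !expr0 !mul1r.
move: H1 H2; move: (y ^+ m) (y ^+ n1) (y ^+ n2) => Y Y1 Y2 H1 H2.
apply: (@cancel_y 2).
transitivity (Y * Y * Y * Y1 * Y2 * y ^+ 2 * (Y * y ^+ 2 * (g * (g * g)) - Y * (Y * Y) * g
   + Y * (Y * Y) * Y)); first by ring.
symmetry.
transitivity (Y * (Y * Y) * Y * y ^+ 2 * ((g - Y * s) * ((Y1 * (y * g) - Y * (y * f1))
   * (Y2 * (y * g) - Y * (y * f2))))); first by ring.
rewrite H1 H2.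
transitivity (Y * (Y * Y) * Y * Y1 * Y2 * y ^+ 2 * (y ^+ 2 * (g * (g * g))
   - g * g * Y * (y * (h1 + h2) + y ^+ 2 * s)
   + g * (Y * Y) * (h1 * h2 + y * s * (h1 + h2)) - Y * (Y * Y) * (s * h1 * h2)));
  first by ring.
by rewrite E1 E2 E3; ring.
Qed.

Theorem mainTheorem10 :
  let B3 := Bcoef 3 1 in                  (* B_3(x) *)
  let F := Bcoef (3 / 2) (1 / 2) in       (* B_{3/2}(y)^{1/2} *)
  let G := Bcoef (3 / 2) (- (1 / 2)) in   (* B_{3/2}(y)^{-1/2} *)
  let P := fun X : laurent =>            (* x X^3 - X + 1 *)
    ladd (lsub (lmul lx (lmul X (lmul X X))) X) lone in
  (* B_3 is a power series solution of X = 1 + x X^3 *)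
  B3 =1 sadd sone (smul sX (smul B3 (smul B3 B3))) /\
  (* B_3(x) = B_{3/2}(x^{1/2})^{1/2} B_{3/2}(-x^{1/2})^{1/2} *)
  ssq B3 =1 smul F (sneg F) /\
  (forall s1 s2 : laurent,
     lequiv (lmul ly s1) (lopp (lser (sneg G))) ->
     lequiv (lmul ly s2) (lser G) ->
     lequiv (P s1) lzero /\ lequiv (P s2) lzero /\
     forall X : laurent,
       lequiv (P X)
         (lmul lx (lmul (lsub X (lser (ssq B3))) (lmul (lsub X s1) (lsub X s2))))).
Proof.
move=> B3 F G P.
have eB : B3 = A 3 1 by apply: fext => k; rewrite /B3 Bcoef_fc // nz31.
have eF : F = A (3/2) (1/2) by apply: fext => k; rewrite /F Bcoef_fc // nzh1.
have eG : G = A (3/2) (-(1/2)) by apply: fext => k; rewrite /G Bcoef_fc // nzh2.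
rewrite /P eB eF eG {P eB eF eG B3 F G}.
set Z := A (3/2) (1/2).
set W : fps := sneg Z.
have hB : A 3 1 = 1 + y * (A 3 1 * (A 3 1 * A 3 1)).
  by rewrite !AM (_ : 1 + (1 + 1) = 3 :> rat) // {1}Ashift.
split.
  by move=> k; exact: (congr1 (fun f : fps => f k) hB).
have hZ0 : Z * Z - 1 - y * (Z * (Z * Z)) = 0.
  rewrite /Z !AM (_ : 1 / 2 + 1 / 2 = 1 :> rat) // (_ : 1 / 2 + 1 = 3 / 2 :> rat) //.
  rewrite Ashift; ring.
have hW0 : W * W - 1 + y * (W * (W * W)) = 0.
  have := congr1 sneg hZ0; rewrite !(snegD, snegN, snegM) sneg1 snegX sneg0.
  by move=> <-; rewrite /W; ring.
have ZW0 : (Z + W) 0%N != 0.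
  by rewrite fcoefD /W /sneg /Z !A_0 expr0 mul1r.
have hv0 : (ssq (A 3 1) : fps) - 1 - y ^+ 2 * ((ssq (A 3 1) : fps) * ((ssq (A 3 1) : fps) * (ssq (A 3 1) : fps))) = 0.
  have hv := congr1 ssq hB; rewrite ssqD ssqM ssqM ssqM ssq1 ssqX in hv.
  move: hv; move: (ssq (A 3 1) : fps) => v hv.
  rewrite {1}hv; ring.
set a := A (3/2) (-(1/2)).
set b : fps := sneg a.
have GZ : a * Z = 1.
  by rewrite /a /Z AM (_ : - (1 / 2) + 1 / 2 = 0 :> rat) // A0.
have GW : b * W = 1 by rewrite /b /W -snegM GZ sneg1.
have Z0 : Z 0%N != 0 by rewrite /Z A_0 oner_eq0.
have [P0 E1 E2 E3] := alg hZ0 hW0 ZW0 Z0 GZ GW.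
have euv : ssq (A 3 1) = Z * W :> fps by apply: uniq_sol.
split.
  by move=> k; exact: (congr1 (fun f : fps => f k) euv).
have R1 : (-b) * ((-b) * (-b)) - (-b) + y = 0.
  transitivity (((-b) * ((-b) * (-b)) - (-b) + y) * ((b * W) * ((b * W) * (b * W))));
    first by rewrite GW; ring.
  transitivity (b * (b * W) * (b * W) - b * (b * b) + y * (b * (b * b)) * (W * (W * W))).
    transitivity (- (b * (b * b)) * ((b * W) * ((b * W) * (b * W)))
       + b * ((b * W) * ((b * W) * (b * W))) + y * (b * (b * b)) * (W * (W * W)));
      first by ring.
    by rewrite GW; ring.
  transitivity (b * (b * b) * (W * W - 1 + y * (W * (W * W)))); first by ring.
  by rewrite hW0; ring.
have R2 : a * (a * a) - a + y = 0.
  transitivity ((a * (a * a) - a + y) * ((a * Z) * ((a * Z) * (a * Z))));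
    first by rewrite GZ; ring.
  transitivity (a * (a * a) - a * (a * Z) * (a * Z) + y * (a * (a * a)) * (Z * (Z * Z))).
    transitivity (a * (a * a) * ((a * Z) * ((a * Z) * (a * Z)))
       - a * ((a * Z) * ((a * Z) * (a * Z))) + y * (a * (a * a)) * (Z * (Z * Z)));
      first by ring.
    by rewrite GZ; ring.
  transitivity (- (a * (a * a)) * (Z * Z - 1 - y * (Z * (Z * Z)))); first by ring.
  by rewrite hZ0; ring.
move=> [n1 f1] [n2 f2] H1 H2.
rewrite lequivP !lmul2 lopp2 ly2 /= expr0 mul1r in H1.
rewrite lequivP !lmul2 ly2 /= expr0 mul1r in H2.
split; first exact: (root_ok H1 R1).
split; first exact: (root_ok H2 R2).
move=> [m g]; rewrite euv.
exact: (fact_ok _ _ H1 H2 E1 E2 E3).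
Qed.
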